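(* Let $\alpha\in(0,1]$, $w\in\mathbb{R}^p$ with $w_k>0$ for all $k$, and let $g(\beta)=\alpha\|w\circ\beta\|_1+\frac{1-\alpha}{2}\|\beta\|_2^2$. If $$\lambda\ge\max_{1\le k\le p}\frac{1}{n^2\alpha w_k}\Big\{\Big|\sum_{i=1}^n\sum_{j=1}^n\delta_i(x_{i,k}-x_{j,k})\mathbf{1}(y_i<y_j)\Big|+\sum_{i=1}^n\sum_{j=1}^n\mathbf{1}\{(i,j)\in\mathcal{K}\}\delta_i|x_{i,k}-x_{j,k}|\Big\},$$ then $\hat\beta=0$ is a minimizer of $\frac{1}{n^2}\sum_{i=1}^n\sum_{j=1}^n\delta_i\{e_i(\beta)-e_j(\beta)\}^-+\lambda g(\beta)$ over $\beta\in\mathbb{R}^p$.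
   Context: Data: $n\ge2$, $y_1,\dots,y_n>0$, $x_i=(x_{i,1},\dots,x_{i,p})^\top\in\mathbb{R}^p$, $\delta_i\in\{0,1\}$; $e_i(\beta)=\log y_i-\beta^\top x_i$; $a^-=\max(-a,0)$; $\circ$ is the elementwise product; $\mathcal{K}=\{(i,j): y_i=y_j,\ 1\le i\le n,\ 1\le j\le n\}$. *)

(* Defs.v *)
From mathcomp Require Import all_boot all_order all_algebra.
From mathcomp Require Import reals exp.
Set Implicit Arguments. Unset Strict Implicit. Unset Printing Implicit Defensive.
Import Order.TTheory GRing.Theory Num.Theory.
Local Open Scope ring_scope.

Section Defs.
Variables (R : realType) (n p : nat).

Definition negpart (a : R) : R := Num.max (- a) 0.

Definition resid (y : 'I_n -> R) (x : 'I_n -> 'I_p -> R) (beta : 'I_p -> R)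
    (i : 'I_n) : R :=
  ln (y i) - \sum_(k < p) beta k * x i k.

Definition enet_pen (alpha : R) (w : 'I_p -> R) (beta : 'I_p -> R) : R :=
  alpha * (\sum_(k < p) `|w k * beta k|)
  + (1 - alpha) / 2 * (\sum_(k < p) beta k ^+ 2).

Definition objective (y : 'I_n -> R) (x : 'I_n -> 'I_p -> R) (delta : 'I_n -> bool)
    (lambda alpha : R) (w : 'I_p -> R) (beta : 'I_p -> R) : R :=
  (n%:R ^+ 2)^-1 * (\sum_(i < n) \sum_(j < n)
      (delta i)%:R * negpart (resid y x beta i - resid y x beta j))
  + lambda * enet_pen alpha w beta.

Definition lambda_bound_k (y : 'I_n -> R) (x : 'I_n -> 'I_p -> R)
    (delta : 'I_n -> bool) (alpha : R) (w : 'I_p -> R) (k : 'I_p) : R :=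
  (n%:R ^+ 2 * alpha * w k)^-1 *
  (`| \sum_(i < n) \sum_(j < n)
        (delta i)%:R * (x i k - x j k) * (y i < y j)%R%:R |
   + \sum_(i < n) \sum_(j < n)
        (y i == y j)%R%:R * (delta i)%:R * `|x i k - x j k|).

End Defs.

(* Main.v *)
Require Import Defs.
From mathcomp Require Import all_boot all_order all_algebra.
From mathcomp Require Import reals exp.
From mathcomp Require Import ring lra.
Import Order.TTheory GRing.Theory Num.Theory.
Local Open Scope ring_scope.

Lemma negpart_ge0 (R : realType) (a : R) : 0 <= negpart a.
Proof. by rewrite /negpart le_max lexx orbT. Qed.

Lemma negpart_ge (R : realType) (a : R) : - a <= negpart a.
Proof. by rewrite /negpart le_max lexx. Qed.

Lemma negpart_neg (R : realType) (a : R) : a < 0 -> negpart a = - a.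
Proof. move=> h; rewrite /negpart; apply/max_idPl; lra. Qed.

Lemma negpart_pos (R : realType) (a : R) : 0 <= a -> negpart a = 0.
Proof. move=> h; rewrite /negpart; apply/max_idPr; lra. Qed.

Theorem mainTheorem5 (R : realType) (n p : nat) (hn : (2 <= n)%N)
    (y : 'I_n -> R) (x : 'I_n -> 'I_p -> R) (delta : 'I_n -> bool)
    (hy : forall i, 0 < y i)
    (alpha : R) (halpha : 0 < alpha <= 1)
    (w : 'I_p -> R) (hw : forall k, 0 < w k)
    (lambda : R)
    (hlambda : forall k : 'I_p, lambda_bound_k y x delta alpha w k <= lambda) :
  forall beta : 'I_p -> R,
    objective y x delta lambda alpha w (fun _ => 0)
    <= objective y x delta lambda alpha w beta.
Proof.
move=> beta.
have hn2 : 0 < (n%:R ^+ 2 : R) by rewrite exprn_gt0 // ltr0n; apply: leq_trans hn.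
set S := fun k : 'I_p => \sum_(i < n) \sum_(j < n)
        (delta i)%:R * (x i k - x j k) * (y i < y j)%R%:R.
have r0 : forall i, resid y x (fun _ => 0) i = ln (y i).
  by move=> i; rewrite /resid big1 ?subr0 // => k _; rewrite mul0r.
have pw : forall i j,
  (delta i)%:R * negpart (resid y x (fun _ => 0) i - resid y x (fun _ => 0) j)
  + \sum_(k < p) beta k * ((delta i)%:R * (x i k - x j k) * (y i < y j)%R%:R)
  <= (delta i)%:R * negpart (resid y x beta i - resid y x beta j).
  move=> i j; rewrite !r0 /resid.
  have -> : \sum_(k < p) beta k * ((delta i)%:R * (x i k - x j k) * (y i < y j)%R%:R)
     = (delta i)%:R * (y i < y j)%R%:R * (\sum_(k < p) beta k * x i k - \sum_(k < p) beta k * x j k).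
    rewrite -sumrB mulr_sumr; apply: eq_bigr => k _; rewrite mulrBr; lra.
  have hd : 0 <= ((delta i)%:R : R) by [].
  case: (ltP (y i) (y j)) => hij.
    have hl : ln (y i) - ln (y j) < 0 by rewrite subr_lt0 ltr_ln ?posrE.
    rewrite negpart_neg // mulr1 -mulrDr ler_wpM2l //.
    rewrite /negpart le_max; apply/orP; left; lra.
  have hl : 0 <= ln (y i) - ln (y j) by rewrite subr_ge0 ler_ln ?posrE.
  rewrite negpart_pos // /= mulr0 mul0r !addr0; apply: mulr_ge0 => //; exact: negpart_ge0.
rewrite /objective.
have key : \sum_(i < n) \sum_(j < n) (delta i)%:R *
      negpart (resid y x (fun _ => 0) i - resid y x (fun _ => 0) j)
   + \sum_(k < p) beta k * S k <=
   \sum_(i < n) \sum_(j < n) (delta i)%:R * negpart (resid y x beta i - resid y x beta j).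
  have -> : \sum_(k < p) beta k * S k = \sum_(i < n) \sum_(j < n) \sum_(k < p)
        beta k * ((delta i)%:R * (x i k - x j k) * (y i < y j)%R%:R).
    rewrite (eq_bigr (fun k => \sum_(i < n) \sum_(j < n)
        beta k * ((delta i)%:R * (x i k - x j k) * (y i < y j)%R%:R))); last first.
      by move=> k _; rewrite /S mulr_sumr; apply: eq_bigr => i _; rewrite mulr_sumr.
    rewrite exchange_big; apply: eq_bigr => i _; exact: exchange_big.
  rewrite -big_split; apply: ler_sum => i _; rewrite -big_split; apply: ler_sum => j _.
  exact: pw.
have pen0 : enet_pen alpha w (fun _ => 0) = 0.
  rewrite /enet_pen !big1 ?mulr0 ?addr0 // => k _; rewrite ?expr0n ?mulr0 ?normr0 //.
rewrite pen0 mulr0 addr0.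
set A := \sum_(i < n) \sum_(j < n) _ in key *.
set B := \sum_(i < n) \sum_(j < n) _ in key *.
suff h : 0 <= (n%:R ^+ 2)^-1 * \sum_(k < p) beta k * S k + lambda * enet_pen alpha w beta.
  have : (n%:R ^+ 2)^-1 * (A + \sum_(k < p) beta k * S k) <= (n%:R ^+ 2)^-1 * B.
    by rewrite ler_wpM2l // invr_ge0 ltW.
  rewrite mulrDr; lra.
have -> : (n%:R ^+ 2)^-1 * \sum_(k < p) beta k * S k + lambda * enet_pen alpha w beta
  = \sum_(k < p) ((n%:R ^+ 2)^-1 * (beta k * S k) + lambda * (alpha * `|w k * beta k|)
     + lambda * ((1 - alpha) / 2 * beta k ^+ 2)).
  rewrite /enet_pen !big_split /= !mulr_sumr mulrDr !mulr_sumr.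
  by rewrite addrA.
apply: sumr_ge0 => k _.
have hk := hlambda k; rewrite /lambda_bound_k -/(S k) in hk.
have hwk := hw k.
have ha : 0 < alpha by case/andP: halpha.
have hpos : 0 < n%:R ^+ 2 * alpha * w k by apply: mulr_gt0 => //; apply: mulr_gt0.
have hS : `|S k| <= lambda * (n%:R ^+ 2 * alpha * w k).
  rewrite -ler_pdivrMr //.
  apply: le_trans hk; rewrite mulrC; apply: ler_wpM2l; first by rewrite invr_ge0 ltW.
  rewrite lerDl; apply: sumr_ge0 => i _; apply: sumr_ge0 => j _.
  by rewrite mulr_ge0 ?mulr_ge0.
have hl0 : 0 <= lambda.
  apply: le_trans hk; apply: mulr_ge0; first by rewrite invr_ge0 ltW.
  apply: addr_ge0 => //; apply: sumr_ge0 => i _; apply: sumr_ge0 => j _.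
  by rewrite mulr_ge0 ?mulr_ge0.
have hq : 0 <= lambda * ((1 - alpha) / 2 * beta k ^+ 2).
  apply: mulr_ge0 => //; apply: mulr_ge0; last exact: sqr_ge0.
  apply: divr_ge0 => //. case/andP: halpha; lra.
have hb : - (`|beta k| * `|S k|) <= beta k * S k.
  by apply: lerNnormlW; rewrite normrM.
have hb2 : `|beta k| * `|S k| <= `|beta k| * (lambda * (n%:R ^+ 2 * alpha * w k)).
  by apply: ler_wpM2l.
have hn0 : (n%:R ^+ 2 : R) != 0 by rewrite gt_eqF.
have e : (n%:R ^+ 2)^-1 * (- (`|beta k| * (lambda * (n%:R ^+ 2 * alpha * w k))))
   = - (lambda * (alpha * (w k * `|beta k|))).
  field; by rewrite pnatr_eq0 -lt0n; apply: leq_trans hn.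
have h3 : (n%:R ^+ 2)^-1 * (- (`|beta k| * (lambda * (n%:R ^+ 2 * alpha * w k))))
   <= (n%:R ^+ 2)^-1 * (beta k * S k).
  apply: ler_wpM2l; first by rewrite invr_ge0 ltW.
  apply: le_trans hb; by rewrite lerN2.
rewrite e in h3.
rewrite normrM (gtr0_norm hwk).
lra.
Qed.
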